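(* Let $\mathcal A_+,\mathcal A_-\subseteq\mathbb Z^n$ be disjoint finite sets such that $(\mathcal A_+,\mathcal A_-)$ is full dimensional and nonseparable, with critical system $F$. Let $\mathcal A=\mathcal A_+\cup\mathcal A_-$, $c\in\mathbb R^{\mathcal A}_{>0}$, and $h:\mathcal A\to\mathbb Z$ a height function lifting $\mathcal A_-$, and set $G(t,x):=F(c\star t^h,x)$ for $(t,x)\in\mathbb R^{n+1}_{>0}$. If $G(t,x)=0$ for some $(t,x)\in\mathbb R^{n+1}_{>0}$, then the Jacobian matrix $J_G(t,x)$ (with respect to $(t,x)$) satisfies $\det J_G(t,x)\neq0$. In particular, for $f\in\mathcal S(\mathcal A_+,\mathcal A_-)$ with nonsigned coefficients $c$, the unique element $t_*$ of $S=\{t>0:G(t,x)=0\text{ for some }x\in\mathbb R^n_{>0}\}$ together with the corresponding $x$ is a nonsingular solution of $G=0$.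
   Context: For $c\in\mathbb R^{\mathcal A}_{>0}$ let $f_c(x)=\sum_{a\in\mathcal A_+}c_ax^a-\sum_{b\in\mathcal A_-}c_bx^b$; $\mathcal S(\mathcal A_+,\mathcal A_-)$ is the set of these. The critical system is $F(c,x)=(f_c(x),x_1\partial_{x_1}f_c(x),\dots,x_n\partial_{x_n}f_c(x))$. Full dimensional: $\dim\operatorname{conv}(\mathcal A)=n$. $\mathcal F(\mathcal A_+)$ is the common refinement of all regular polyhedral subdivisions of $\mathcal A_+$, $\mathcal F_n(\mathcal A_+)$ its $n$-cells; $(\mathcal A_+,\mathcal A_-)$ is nonseparable if $\mathcal A_-\subseteq\operatorname{relint}\operatorname{conv}(\mathcal A_+)$ and some $D\in\mathcal F_n(\mathcal A_+)$ contains $\mathcal A_-$. A height function $h$ lifts $\mathcal A_-$ if $h(a)>0$ for $a\in\mathcal A_-$ and $h(a)=0$ for $a\in\mathcal A_+$; $c\star t^h=(c_at^{h(a)})_a$. (For nonempty $\mathcal A_-$ under these hypotheses, $S$ is known to be a singleton.) *)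

(* Defs.v *)
From HB Require Import structures.
From mathcomp Require Import all_boot all_order all_algebra.
From mathcomp Require Import finmap.
From mathcomp Require Import all_classical all_reals all_analysis.
Set Implicit Arguments. Unset Strict Implicit. Unset Printing Implicit Defensive.
Import Order.TTheory GRing.Theory Num.Theory.
Import numFieldNormedType.Exports.
Local Open Scope ring_scope.
Local Open Scope fset_scope.

Section Defs.
Variables (R : realType) (n : nat).

Definition rvR (p : 'rV[int]_n) : 'rV[R]_n := map_mx (fun z : int => z%:~R) p.

Definition dotR (a : 'rV[R]_n) (p : 'rV[int]_n) : R := \sum_(i < n) a 0 i * (p 0 i)%:~R.

Definition conv (S : {fset 'rV[int]_n}) : set 'rV[R]_n :=
  fun q => exists lam : 'rV[int]_n -> R,
     (forall p, p \in S -> 0 <= lam p) /\ \sum_(p <- S) lam p = 1 /\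
     q = \sum_(p <- S) lam p *: rvR p.

Definition aff (S : {fset 'rV[int]_n}) : set 'rV[R]_n :=
  fun q => exists lam : 'rV[int]_n -> R,
     \sum_(p <- S) lam p = 1 /\ q = \sum_(p <- S) lam p *: rvR p.

Definition relint_conv (S : {fset 'rV[int]_n}) : set 'rV[R]_n :=
  fun q => conv S q /\ exists2 e : R, 0 < e &
     forall r, aff S r -> `|r - q| < e -> conv S r.

Definition dim_full (D : set 'rV[R]_n) : Prop :=
  exists q0 (q : 'I_n -> 'rV[R]_n), D q0 /\ (forall i, D (q i)) /\
    \det (\matrix_(i < n, j < n) (q i - q0) 0 j) != 0.

Definition full_dimensional (A : {fset 'rV[int]_n}) : Prop :=
  dim_full (conv A).

(* C is a cell of the regular polyhedral subdivision of A induced by the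
   height w : A -> R: the projection of a lower face of the lifted
   configuration {(p, w p)}. *)
Definition regular_cell (A : {fset 'rV[int]_n}) (w : 'rV[int]_n -> R)
  (C : set 'rV[R]_n) : Prop :=
  exists (a : 'rV[R]_n) (b : R),
    (forall p, p \in A -> (dotR a p + b <= w p)%R) /\
    C = conv [fset p in A | (w p == dotR a p + b)%R].

(* D is a cell of F(A): the common refinement of all regular subdivisions
   of A, i.e. a nonempty intersection of one cell of each regular
   subdivision. *)
Definition refinement_cell (A : {fset 'rV[int]_n}) (D : set 'rV[R]_n) : Prop :=
  (exists q, D q) /\
  exists sel : ('rV[int]_n -> R) -> set 'rV[R]_n,
    (forall w, regular_cell A w (sel w)) /\
    D = (fun q => forall w, sel w q).

Definition refinement_ncell (A : {fset 'rV[int]_n}) (D : set 'rV[R]_n) : Prop :=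
  refinement_cell A D /\ dim_full D.

Definition nonseparable (Ap Am : {fset 'rV[int]_n}) : Prop :=
  (forall b, b \in Am -> relint_conv Ap (rvR b)) /\
  exists D, refinement_ncell Ap D /\ (forall b, b \in Am -> D (rvR b)).

Definition lifts (Ap Am : {fset 'rV[int]_n}) (h : 'rV[int]_n -> int) : Prop :=
  (forall a, a \in Am -> (0 < h a)%R) /\ (forall a, a \in Ap -> h a = 0).

Definition mono (x : 'rV[R]_n) (a : 'rV[int]_n) : R := \prod_(i < n) x 0 i ^ a 0 i.

Definition fpoly (Ap Am : {fset 'rV[int]_n}) (c : 'rV[int]_n -> R) (x : 'rV[R]_n) : R :=
  \sum_(a <- Ap) c a * mono x a - \sum_(b <- Am) c b * mono x b.

Definition xdfpoly (Ap Am : {fset 'rV[int]_n}) (c : 'rV[int]_n -> R) (i : 'I_n)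
  (x : 'rV[R]_n) : R :=
  \sum_(a <- Ap) c a * (a 0 i)%:~R * mono x a
  - \sum_(b <- Am) c b * (b 0 i)%:~R * mono x b.

Definition crit (Ap Am : {fset 'rV[int]_n}) (c : 'rV[int]_n -> R) (x : 'rV[R]_n)
  : 'rV[R]_(n.+1) :=
  \row_(k < n.+1) match unlift ord0 k with
                  | None => fpoly Ap Am c x
                  | Some i => xdfpoly Ap Am c i x
                  end.

Definition cstar (c : 'rV[int]_n -> R) (h : 'rV[int]_n -> int) (t : R) :
  'rV[int]_n -> R := fun a => c a * t ^ h a.

(* a point (t, x) of R^{n+1} is encoded as z with t = z 0 0 and
   x_i = z 0 (lift 0 i) *)
Definition xpart (z : 'rV[R]_(n.+1)) : 'rV[R]_n := \row_(i < n) z 0 (lift ord0 i).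

Definition Gsys (Ap Am : {fset 'rV[int]_n}) (c : 'rV[int]_n -> R)
  (h : 'rV[int]_n -> int) (z : 'rV[R]_(n.+1)) : 'rV[R]_(n.+1) :=
  crit Ap Am (cstar c h (z 0 ord0)) (xpart z).

End Defs.

(* Main.v *)
Require Import Defs.
From HB Require Import structures.
From mathcomp Require Import all_boot all_order all_algebra.
From mathcomp Require Import finmap.
From mathcomp Require Import all_classical all_reals all_analysis.
From mathcomp Require Import ring lra.
Import Order.TTheory GRing.Theory Num.Theory.
Import numFieldNormedType.Exports.
Local Open Scope ring_scope.

Module Helpers.
Set Implicit Arguments. Unset Strict Implicit. Unset Printing Implicit Defensive.
Section P1.
Variable R : realType.

Lemma is_derive_coord m (z v : 'rV[R]_m) k :
  is_derive z v (fun y : 'rV[R]_m => y 0 k) (v 0 k).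
Proof.
have @f : {linear 'rV[R]_m -> R}.
  by exists (fun N : 'rV[R]_m => N 0 k); do 2![eexists]; do ?[constructor];
     rewrite ?mxE// => ? *; rewrite ?mxE//; move=> ?; rewrite !mxE.
have -> : (fun y : 'rV[R]_m => y 0 k) = f by [].
apply: DeriveDef; first exact/diff_derivable/linear_differentiable/coord_continuous.
rewrite deriveE; last exact/linear_differentiable/coord_continuous.
by rewrite diff_lin //; exact: coord_continuous.
Qed.

Lemma differentiable_pow m (z : 'rV[R]_m) k (e : int) : 0 < z 0 k ->
  differentiable (fun y : 'rV[R]_m => y 0 k ^ e) z.
Proof.
move=> zk; case: e => [[|n]|n].
- rewrite (_ : (fun _ => _) = cst 1); first exact: differentiable_cst.
  by apply/funext => y; rewrite expr0z.
- rewrite (_ : (fun _ => _) = (fun y : 'rV[R]_m => y 0 k) ^+ n.+1).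
    exact/differentiableX/differentiable_coord.
  by apply/funext => y; rewrite exprfctE.
- rewrite (_ : (fun _ => _) = (fun y => (((fun y : 'rV[R]_m => y 0 k) ^+ n.+1) y)^-1)).
    apply: differentiableV; first exact/differentiableX/differentiable_coord.
    by rewrite exprfctE expf_neq0 // gt_eqF.
  by apply/funext => y; rewrite exprfctE.
Qed.



Lemma is_derive_pow m (z v : 'rV[R]_m) k (e : int) : 0 < z 0 k ->
  is_derive z v (fun y : 'rV[R]_m => y 0 k ^ e)
    (z 0 k ^ e * (e%:~R * v 0 k / z 0 k)).
Proof.
move=> zk; have zk0 : z 0 k != 0 by rewrite gt_eqF.
have dc := is_derive_coord z v k.
case: e => [n|n].
- rewrite (_ : (fun _ => _) = (fun y : 'rV[R]_m => y 0 k) ^+ n); last first.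
    by apply/funext => y; rewrite exprfctE.
  apply: is_derive_eq; case: n => [|n]; first by rewrite !mul0r mulr0 scale0r.
  rewrite /= exprSz -exprnP -pmulrn [_ *: _]/=.
  have xn : z 0 k ^+ n != 0 by rewrite expf_neq0.
  rewrite -[(_ *: v 0 k)]/(_ * v 0 k). by field.
- rewrite (_ : (fun _ => _) = (fun y => (((fun y : 'rV[R]_m => y 0 k) ^+ n.+1) y)^-1)); last first.
    by apply/funext => y; rewrite exprfctE.
  have fx : ((fun y : 'rV[R]_m => y 0 k) ^+ n.+1) z != 0.
    by rewrite exprfctE expf_neq0.
  apply: DeriveDef; first exact: derivableV.
  rewrite deriveV // derive_val exprfctE /=.
  have xn : z 0 k ^+ n != 0 by rewrite expf_neq0.
  have -> : ((Negz n)%:~R : R) = - (n.+1)%:R by rewrite NegzE mulrNz -pmulrn.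
  rewrite -[z 0 k ^ Negz n]/((z 0 k ^+ n.+1)^-1).
  rewrite -[(_ *: v 0 k)]/(_ * v 0 k) -[(_ *: (_ * v 0 k))]/(_ * (_ * v 0 k)).
  rewrite expr2 exprS.
  by field; rewrite zk0 xn.
Qed.

Section Seq.
Variables (m : nat) (I : Type) (z v : 'rV[R]_m).

Lemma is_derive_sum_seq (s : seq I) (F : I -> 'rV[R]_m -> R) (dF : I -> R) :
  (forall i, is_derive z v (F i) (dF i)) ->
  is_derive z v (fun y => \sum_(i <- s) F i y) (\sum_(i <- s) dF i).
Proof.
move=> dFi; elim: s => [|i s IH].
  rewrite big_nil (_ : (fun _ => _) = cst 0); first exact: is_derive_cst.
  by apply/funext => y; rewrite big_nil.
rewrite big_cons (_ : (fun _ => _) = F i + (fun y => \sum_(i <- s) F i y)).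
  exact: is_deriveD.
by apply/funext => y; rewrite big_cons.
Qed.

Lemma differentiable_sum_seq (s : seq I) (F : I -> 'rV[R]_m -> R) :
  (forall i, differentiable (F i) z) ->
  differentiable (fun y => \sum_(i <- s) F i y) z.
Proof.
move=> dFi; elim: s => [|i s IH].
  rewrite (_ : (fun _ => _) = cst 0); first exact: differentiable_cst.
  by apply/funext => y; rewrite big_nil.
rewrite (_ : (fun _ => _) = F i + (fun y => \sum_(i <- s) F i y)).
  exact: differentiableD.
by apply/funext => y; rewrite big_cons.
Qed.

Lemma is_derive_prod_seq (s : seq I) (F : I -> 'rV[R]_m -> R) (r : I -> R) :
  (forall i, is_derive z v (F i) (F i z * r i)) ->
  is_derive z v (fun y => \prod_(i <- s) F i y)
    (\prod_(i <- s) F i z * \sum_(i <- s) r i).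
Proof.
move=> dFi; elim: s => [|i s IH].
  rewrite big_nil (_ : (fun _ => _) = cst 1).
    by rewrite big_nil mulr0; exact: is_derive_cst.
  by apply/funext => y; rewrite big_nil.
rewrite (_ : (fun _ => _) = F i * (fun y => \prod_(i <- s) F i y)); last first.
  by apply/funext => y; rewrite big_cons.
apply: is_derive_eq; rewrite !big_cons /=.
rewrite -[(F i z *: _)]/(F i z * _) -[(_ *: (F i z * r i))]/(_ * (F i z * r i)).
ring.
Qed.

Lemma differentiable_prod_seq (s : seq I) (F : I -> 'rV[R]_m -> R) :
  (forall i, differentiable (F i) z) ->
  differentiable (fun y => \prod_(i <- s) F i y) z.
Proof.
move=> dFi; elim: s => [|i s IH].
  rewrite (_ : (fun _ => _) = cst 1); first exact: differentiable_cst.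
  by apply/funext => y; rewrite big_nil.
rewrite (_ : (fun _ => _) = F i * (fun y => \prod_(i <- s) F i y)).
  exact: differentiableM.
by apply/funext => y; rewrite big_cons.
Qed.
End Seq.

Definition MonoZ m (e : 'I_m -> int) (y : 'rV[R]_m) := \prod_(k < m) y 0 k ^ e k.

Lemma is_derive_MonoZ m (e : 'I_m -> int) (z v : 'rV[R]_m) :
  (forall k, 0 < z 0 k) ->
  is_derive z v (MonoZ e) (MonoZ e z * \sum_(k < m) (e k)%:~R * v 0 k / z 0 k).
Proof.
move=> zp; apply: is_derive_prod_seq => k; exact: (is_derive_pow v (e k) (zp k)).
Qed.

Lemma differentiable_MonoZ m (e : 'I_m -> int) (z : 'rV[R]_m) :
  (forall k, 0 < z 0 k) -> differentiable (MonoZ e) z.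
Proof. by move=> zp; apply: differentiable_prod_seq => k; exact: differentiable_pow. Qed.

Lemma MonoZ_gt0 m (e : 'I_m -> int) (z : 'rV[R]_m) :
  (forall k, 0 < z 0 k) -> 0 < MonoZ e z.
Proof. by move=> zp; rewrite /MonoZ; apply: prodr_gt0 => k _; exact: exprz_gt0. Qed.

End P1.

Local Open Scope fset_scope.
Section P2.
Variables (R : realType) (n : nat) (Ap Am : {fset 'rV[int]_n}) (c : 'rV[int]_n -> R)
  (h : 'rV[int]_n -> int).

Definition Ex (q : 'rV[int]_n) (k : 'I_n.+1) : int :=
  match unlift ord0 k with None => h q | Some i => q 0 i end.
Definition wt (j : 'I_n.+1) (q : 'rV[int]_n) : R :=
  match unlift ord0 j with None => 1 | Some i => (q 0 i)%:~R end.
Definition Tt (q : 'rV[int]_n) (y : 'rV[R]_n.+1) : R := c q * MonoZ (Ex q) y.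
Definition Comp (j : 'I_n.+1) (y : 'rV[R]_n.+1) : R :=
  \sum_(q <- Ap) wt j q * Tt q y - \sum_(q <- Am) wt j q * Tt q y.

Lemma Tt_eq q (y : 'rV[R]_n.+1) : cstar c h (y 0 ord0) q * mono (xpart y) q = Tt q y.
Proof.
rewrite /cstar /mono /Tt /MonoZ big_ord_recl -mulrA; congr (_ * (_ * _)).
  by rewrite /Ex unlift_none.
by apply: eq_bigr => i _; rewrite /Ex liftK mxE.
Qed.

Lemma Gsys_Comp (y : 'rV[R]_n.+1) j : Gsys Ap Am c h y 0 j = Comp j y.
Proof.
rewrite /Gsys /crit mxE /Comp; case: (unliftP ord0 j) => [i ->|->].
- rewrite /xdfpoly /wt ?liftK /=.
  by congr (_ - _); apply: eq_bigr => q _; rewrite mulrAC Tt_eq mulrC.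
- rewrite /fpoly /wt ?unlift_none /=.
  by congr (_ - _); apply: eq_bigr => q _; rewrite Tt_eq mul1r.
Qed.


Lemma is_derive_scal m (z v : 'rV[R]_m) (f : 'rV[R]_m -> R) df a :
  is_derive z v f df -> is_derive z v (fun y => a * f y) (a * df).
Proof.
move=> H; have := is_deriveZ a H.
by rewrite (_ : a \*: f = (fun y => a * f y)) //; apply/funext.
Qed.

Lemma differentiable_scal m (z : 'rV[R]_m) (f : 'rV[R]_m -> R) a :
  differentiable f z -> differentiable (fun y => a * f y) z.
Proof.
move=> H; have := differentiableZ a H.
by rewrite (_ : a *: f = (fun y => a * f y)) //; apply/funext.
Qed.

Definition Sk (z v : 'rV[R]_n.+1) (q : 'rV[int]_n) :=
  \sum_(k < n.+1) (Ex q k)%:~R * v 0 k / z 0 k.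

Lemma is_derive_Comp (z v : 'rV[R]_n.+1) j : (forall k, 0 < z 0 k) ->
  is_derive z v (Comp j)
   (\sum_(q <- Ap) wt j q * (c q * (MonoZ (Ex q) z * Sk z v q))
  - \sum_(q <- Am) wt j q * (c q * (MonoZ (Ex q) z * Sk z v q))).
Proof.
move=> zp.
rewrite (_ : Comp j = (fun y => \sum_(q <- Ap) wt j q * Tt q y)
   - (fun y => \sum_(q <- Am) wt j q * Tt q y)); last by apply/funext.
apply: is_deriveB; apply: is_derive_sum_seq => q;
  apply: is_derive_scal; apply: is_derive_scal; exact: is_derive_MonoZ.
Qed.

Lemma differentiable_Comp (z : 'rV[R]_n.+1) j : (forall k, 0 < z 0 k) ->
  differentiable (Comp j) z.
Proof.
move=> zp.
rewrite (_ : Comp j = (fun y => \sum_(q <- Ap) wt j q * Tt q y)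
   - (fun y => \sum_(q <- Am) wt j q * Tt q y)); last by apply/funext.
apply: differentiableB; apply: differentiable_sum_seq => q;
  apply: differentiable_scal; apply: differentiable_scal; exact: differentiable_MonoZ.
Qed.

Lemma Gsys_sum : Gsys Ap Am c h =
  \sum_(j < n.+1) (fun y => Comp j y *: (delta_mx 0 j : 'rV[R]_n.+1)).
Proof.
rewrite fct_sumE; apply/funext => y; apply/rowP => j.
rewrite Gsys_Comp summxE (bigD1 j) //= big1 ?addr0.
  by rewrite !mxE !eqxx mulr1.
by move=> i ij; rewrite !mxE eq_sym (negbTE ij) andbF mulr0.
Qed.

Lemma differentiable_Gsys (z : 'rV[R]_n.+1) : (forall k, 0 < z 0 k) ->
  differentiable (Gsys Ap Am c h) z.
Proof.
move=> zp; rewrite Gsys_sum; apply: differentiable_sum => j.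
by apply: differentiableZl; exact: differentiable_Comp.
Qed.

Definition Dv (z : 'rV[R]_n.+1) j k :=
  \sum_(q <- Ap) wt j q * (c q * (MonoZ (Ex q) z * ((Ex q k)%:~R / z 0 k)))
  - \sum_(q <- Am) wt j q * (c q * (MonoZ (Ex q) z * ((Ex q k)%:~R / z 0 k))).

Lemma Sk_delta (z : 'rV[R]_n.+1) k q : Sk z (delta_mx 0 k) q = (Ex q k)%:~R / z 0 k.
Proof.
rewrite /Sk (bigD1 k) //= big1 ?addr0.
  by rewrite !mxE !eqxx mulr1.
by move=> i ik; rewrite !mxE (negbTE ik) andbF mulr0 mul0r.
Qed.

Lemma jac_entry (z : 'rV[R]_n.+1) k j : (forall k, 0 < z 0 k) ->
  jacobian (Gsys Ap Am c h) z k j = Dv z j k.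
Proof.
move=> zp; have dG := differentiable_Gsys zp.
have := deriveEjacobian (delta_mx 0 k) dG.
rewrite -rowE => eq.
have -> : jacobian (Gsys Ap Am c h) z k j = row k (jacobian (Gsys Ap Am c h) z) 0 j.
  by rewrite [RHS]mxE.
rewrite -eq.
rewrite derive_mx ?mxE; last exact: diff_derivable.
rewrite (_ : (fun t => Gsys Ap Am c h t 0 j) = Comp j); last first.
  by apply/funext => y; rewrite Gsys_Comp.
rewrite (@derive_val _ _ _ _ _ _ _ (is_derive_Comp (delta_mx 0 k) j zp)).
by rewrite /Dv; under eq_bigr do rewrite Sk_delta; under [X in _ - X]eq_bigr do rewrite Sk_delta.
Qed.

End P2.

Local Close Scope fset_scope.
Section P4.
Variables (R : realType) (n : nat).
Implicit Types (u r : 'rV[R]_n) (p q : 'rV[int]_n).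

Definition dR u r : R := \sum_(i < n) u 0 i * r 0 i.

Lemma dotR_dR u p : dotR u p = dR u (rvR R p).
Proof. by apply: eq_bigr => i _; rewrite mxE. Qed.

Lemma dRD u r1 r2 : dR u (r1 + r2) = dR u r1 + dR u r2.
Proof. by rewrite /dR -big_split; apply: eq_bigr => i _; rewrite mxE mulrDr. Qed.

Lemma dRZ u k r : dR u (k *: r) = k * dR u r.
Proof. by rewrite /dR mulr_sumr; apply: eq_bigr => i _; rewrite mxE mulrCA. Qed.

Lemma dRB u r1 r2 : dR u (r1 - r2) = dR u r1 - dR u r2.
Proof. by rewrite dRD -scaleN1r dRZ mulN1r. Qed.

Lemma dR_sum u (s : seq 'rV[int]_n) (lam : 'rV[int]_n -> R) :
  dR u (\sum_(p <- s) lam p *: rvR R p) = \sum_(p <- s) lam p * dR u (rvR R p).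
Proof.
elim: s => [|p s IH]; first by rewrite !big_nil /dR big1 // => i _; rewrite mxE mulr0.
by rewrite !big_cons dRD dRZ IH.
Qed.

Lemma jensen (s : seq 'rV[int]_n) (lam g : 'rV[int]_n -> R) :
  (forall p, p \in s -> 0 <= lam p) -> \sum_(p <- s) lam p = 1 ->
  (\sum_(p <- s) lam p * g p) ^+ 2 <= \sum_(p <- s) lam p * g p ^+ 2.
Proof.
move=> l0 l1; set m := \sum_(p <- s) lam p * g p.
have : 0 <= \sum_(p <- s) lam p * (g p - m) ^+ 2.
  rewrite big_seq; apply: sumr_ge0 => p ps; apply: mulr_ge0; [exact: l0|exact: sqr_ge0].
rewrite (eq_bigr (fun p => lam p * g p ^+ 2 - 2 * m * (lam p * g p) + m ^+ 2 * lam p)); last first.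
  by move=> p _; rewrite /m; ring.
rewrite big_split sumrB -!mulr_sumr /= l1 -/m; lra.
Qed.

Lemma sum_seq_eq0 (s : seq 'rV[int]_n) (F : 'rV[int]_n -> R) :
  (forall p, p \in s -> 0 <= F p) -> \sum_(p <- s) F p <= 0 ->
  forall p, p \in s -> F p = 0.
Proof.
elim: s => [|a s IH] //= F0; rewrite big_cons => Fs p.
have Fa := F0 a (mem_head _ _).
have Fr : 0 <= \sum_(p <- s) F p.
  by rewrite big_seq; apply: sumr_ge0 => q qs; apply: F0; rewrite in_cons qs orbT.
rewrite in_cons => /orP [/eqP ->|ps]; first lra.
apply: IH => //; first by move=> q qs; apply: F0; rewrite in_cons qs orbT.
lra.
Qed.


Lemma conv_dR (S : {fset 'rV[int]_n}) r u s0 : Defs.conv S r ->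
  (forall p, p \in S -> dR u (rvR R p) = s0) -> dR u r = s0.
Proof.
move=> [lam [l0 [l1 ->]]] H; rewrite dR_sum.
rewrite (eq_big_seq (fun p => lam p * s0)); last by move=> p pS; rewrite H.
by rewrite -mulr_suml l1 mul1r.
Qed.

Lemma cell_le (Ap : {fset 'rV[int]_n}) (u a : 'rV[R]_n) (b0 : R) p :
  Defs.conv [fset q in Ap | (dotR u q ^+ 2 == dotR a q + b0)%R]%fset (rvR R p) ->
  dotR u p ^+ 2 <= dotR a p + b0.
Proof.
move=> [lam [l0 [l1 e]]].
rewrite !dotR_dR e !dR_sum.
apply: le_trans (jensen _ l0 l1) _.
rewrite (eq_big_seq (fun q => lam q * dR a (rvR R q) + lam q * b0)); last first.
  move=> q; rewrite !inE => /andP [_ /eqP]; rewrite !dotR_dR => ->; ring.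
by rewrite big_split /= -mulr_suml l1 mul1r.
Qed.

Lemma sum_ind (Ap : {fset 'rV[int]_n}) a0 : a0 \in Ap ->
  \sum_(p <- Ap) (p == a0)%:R = 1 :> R.
Proof.
move=> aA; rewrite (big_fsetD1 _ aA) /= eqxx big_seq big1 ?addr0 //.
by move=> p; rewrite !inE => /andP [/negbTE -> _].
Qed.

Lemma sum_indZ (Ap : {fset 'rV[int]_n}) a0 (F : 'rV[int]_n -> 'rV[R]_n) : a0 \in Ap ->
  \sum_(p <- Ap) (p == a0)%:R *: F p = F a0.
Proof.
move=> aA; rewrite (big_fsetD1 _ aA) /= eqxx scale1r big_seq big1 ?addr0 //.
by move=> p; rewrite !inE => /andP [/negbTE -> _]; rewrite scale0r.
Qed.

Lemma relint_eq (Ap : {fset 'rV[int]_n}) (u a : 'rV[R]_n) (b0 : R) b a0 :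
  relint_conv Ap (rvR R b) -> a0 \in Ap ->
  (forall p, p \in Ap -> dotR u p ^+ 2 = dotR a p + b0) ->
  dotR u b ^+ 2 = dotR a b + b0 -> dotR u a0 = dotR u b.
Proof.
move=> [[lam [l0 [l1 eb]]] [e e0 He]] aA Hp Hb.
set d := `|rvR R b - rvR R a0|.
have d0 : 0 <= d by exact: normr_ge0.
set del := e / (d + 1).
have del0 : 0 < del by rewrite divr_gt0 // ltr_wpDl.
set r := rvR R b + del *: (rvR R b - rvR R a0).
have affr : aff Ap r.
  exists (fun p => (1 + del) * lam p - del * (p == a0)%:R); split.
    by rewrite sumrB -!mulr_sumr l1 sum_ind // !mulr1 addrK.
  under eq_bigr do rewrite scalerBl -!scalerA.
  rewrite sumrB -!scaler_sumr -eb sum_indZ //.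
  by rewrite /r /del; apply/rowP => i; rewrite !mxE; ring.
have nr : `|r - rvR R b| < e.
  rewrite /r addrAC subrr add0r normrZ gtr0_norm // /del.
  rewrite mulrAC ltr_pdivrMr ?ltr_wpDl //; rewrite -/d; nra.
have [mu [m0 [m1 er]]] := He r affr nr.
have Hr : dR u r ^+ 2 <= dR a r + b0.
  rewrite {1 2}er !dR_sum; apply: le_trans (jensen _ m0 m1) _.
  rewrite (eq_big_seq (fun q => mu q * dR a (rvR R q) + mu q * b0)); last first.
    by move=> q qA; rewrite -(dotR_dR u) -(dotR_dR a) Hp //; ring.
  by rewrite big_split /= -mulr_suml m1 mul1r.
have eu : dR u r = dotR u b + del * (dotR u b - dotR u a0).
  by rewrite /r dRD dRZ dRB !dotR_dR.
have ea : dR a r = dotR a b + del * (dotR a b - dotR a a0).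
  by rewrite /r dRD dRZ dRB !dotR_dR.
have Ha := Hp a0 aA.
move: Hr; rewrite eu ea => Hr.
have : del * (1 + del) * (dotR u b - dotR u a0) ^+ 2 <= 0 by nra.
have dd : 0 < del * (1 + del) by rewrite mulr_gt0 // addr_gt0.
rewrite pmulr_rle0 // => sq.
have : (dotR u b - dotR u a0) ^+ 2 == 0 by rewrite eq_le sq sqr_ge0.
by rewrite sqrf_eq0 subr_eq0 => /eqP ->.
Qed.


Lemma sum_l (S : {fset 'rV[int]_n}) (T : 'rV[int]_n -> R) (a : 'rV[R]_n) b0 :
  \sum_(q <- S) T q * (dotR a q + b0) =
  \sum_(i < n) a 0 i * (\sum_(q <- S) T q * (q 0 i)%:~R) + b0 * \sum_(q <- S) T q.
Proof.
rewrite /dotR; under eq_bigr do rewrite mulrDr mulr_sumr.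
rewrite big_split /= exchange_big /=; congr (_ + _).
  by apply: eq_bigr => i _; rewrite mulr_sumr; apply: eq_bigr => q _; ring.
by rewrite mulr_sumr; apply: eq_bigr => q _; ring.
Qed.

Lemma sum_le_seq (S : {fset 'rV[int]_n}) (F G : 'rV[int]_n -> R) :
  (forall q, q \in S -> F q <= G q) -> \sum_(q <- S) F q <= \sum_(q <- S) G q.
Proof. by move=> H; rewrite big_seq [X in _ <= X]big_seq; apply: ler_sum. Qed.

Lemma key (Ap Am : {fset 'rV[int]_n}) (T : 'rV[int]_n -> R) (u : 'rV[R]_n) :
  full_dimensional R (Ap `|` Am)%fset -> nonseparable R Ap Am ->
  (forall q, q \in Ap -> 0 < T q) -> (forall q, q \in Am -> 0 < T q) ->
  \sum_(q <- Ap) T q = \sum_(q <- Am) T q ->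
  (forall i, \sum_(q <- Ap) T q * (q 0 i)%:~R = \sum_(q <- Am) T q * (q 0 i)%:~R) ->
  u != 0 ->
  \sum_(q <- Am) T q * dotR u q ^+ 2 < \sum_(q <- Ap) T q * dotR u q ^+ 2.
Proof.
move=> FD NS Tp Tm S0 S1 u0.
case: NS => relB. case=> D0. case=> H DB. case: H => Hc _. case: Hc => [[qD HqD] [sel [selH Deq]]].
have [Am0|[b bm]] := fset_0Vmem Am.
  exfalso.
  have nA : forall p, p \in Ap -> False.
    move=> p pA.
    have H : forall q, q \in Ap -> 0 <= T q by move=> q qA; apply/ltW/Tp.
    have := sum_seq_eq0 H; rewrite S0 Am0 big_seq_fset0 lexx => /(_ isT p pA) Tp0.
    by move: (Tp p pA); rewrite Tp0 ltxx.
  move: FD => [q0 [_ [[lam [_ [l1 _]]] _]]].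
  have : \sum_(p <- (Ap `|` Am)%fset) lam p = 0.
    by rewrite big_seq big1 // => p; rewrite in_fsetU Am0 inE orbF => /nA.
  by rewrite l1 => /eqP; rewrite oner_eq0.
pose w := fun p => dotR u p ^+ 2.
have [a [b0 [lle selw]]] := selH w.
pose l := fun p => dotR a p + b0.
have Hm : forall p, p \in Am -> w p <= l p.
  move=> p pm; have := DB p pm; rewrite Deq => /(_ w); rewrite selw.
  exact: cell_le.
have El : \sum_(q <- Ap) T q * l q = \sum_(q <- Am) T q * l q.
  by rewrite /l !sum_l S0; congr (_ + _); apply: eq_bigr => i _; rewrite S1.
rewrite ltNge; apply/negP => Hle.
have eqA : forall p, p \in Ap -> w p = l p.
  move=> p pA.
  have := @sum_seq_eq0 Ap (fun q => T q * (w q - l q)).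
  move=> /(_ _ _ p pA) H; have := Tp p pA => Tp0.
  suff : T p * (w p - l p) = 0.
    by move/eqP; rewrite mulf_eq0 gt_eqF //= subr_eq0 => /eqP.
  apply: H.
    by move=> q qA; apply: mulr_ge0; [exact/ltW/Tp|rewrite subr_ge0; exact: lle].
  rewrite (eq_bigr (fun q => T q * w q - T q * l q)); last by move=> q _; ring.
  rewrite sumrB El subr_le0; apply: le_trans Hle _.
  apply: sum_le_seq => q qm; apply: ler_wpM2l; [exact/ltW/Tm|exact: Hm].
have eqB : w b = l b.
  have := @sum_seq_eq0 Am (fun q => T q * (l q - w q)).
  move=> /(_ _ _ b bm) H; have := Tm b bm => Tb0.
  suff : T b * (l b - w b) = 0.
    by move/eqP; rewrite mulf_eq0 gt_eqF //= subr_eq0 => /eqP.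
  apply: H.
    by move=> q qm; apply: mulr_ge0; [exact/ltW/Tm|rewrite subr_ge0; exact: Hm].
  rewrite (eq_bigr (fun q => T q * l q - T q * w q)); last by move=> q _; ring.
  rewrite sumrB -El subr_le0; apply: le_trans Hle.
  apply: sum_le_seq => q qA; apply: ler_wpM2l; [exact/ltW/Tp|exact: lle].
have sA : forall p, p \in Ap -> dotR u p = dotR u b.
  by move=> p pA; apply: (relint_eq (relB b bm) pA); [exact: eqA | exact: eqB].
have sAll : forall p, p \in (Ap `|` Am)%fset -> dR u (rvR R p) = dotR u b.
  move=> p; rewrite in_fsetU => /orP [pA|pm]; first by rewrite -dotR_dR sA.
  have [cp _] := relB p pm.
  by apply: (conv_dR cp) => q qA; rewrite -dotR_dR sA.
move: FD => [q0 [q [Hq0 [Hq dq]]]].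
have e0 := conv_dR Hq0 sAll.
have ei : forall i, dR u (q i) = dotR u b by move=> i; exact: conv_dR (Hq i) sAll.
move: dq; rewrite -det_tr => /det0P; apply.
exists u => //; apply/rowP => j; rewrite !mxE.
rewrite (eq_bigr (fun i => u 0 i * (q j - q0) 0 i)); last by move=> i _; rewrite !mxE.
by rewrite -/(dR u (q j - q0)) dRB ei e0 subrr.
Qed.

End P4.

Section P5.
Variables (R : realType) (n : nat).

Lemma Am_nonempty (Ap Am : {fset 'rV[int]_n}) (T : 'rV[int]_n -> R) :
  full_dimensional R (Ap `|` Am)%fset -> (forall q, q \in Ap -> 0 < T q) ->
  \sum_(q <- Ap) T q = \sum_(q <- Am) T q -> exists b, b \in Am.
Proof.
move=> FD Tp S0; have [Am0|[b bm]] := fset_0Vmem Am; last by exists b.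
exfalso.
have nA : forall p, p \in Ap -> False.
  move=> p pA.
  have H : forall q, q \in Ap -> 0 <= T q by move=> q qA; apply/ltW/Tp.
  have := sum_seq_eq0 H; rewrite S0 Am0 big_seq_fset0 lexx => /(_ isT p pA) Tp0.
  by move: (Tp p pA); rewrite Tp0 ltxx.
move: FD => [q0 [_ [[lam [_ [l1 _]]] _]]].
have : \sum_(p <- (Ap `|` Am)%fset) lam p = 0.
  by rewrite big_seq big1 // => p; rewrite in_fsetU Am0 inE orbF => /nA.
by rewrite l1 => /eqP; rewrite oner_eq0.
Qed.

Lemma sum_pos_seq (S : {fset 'rV[int]_n}) (F : 'rV[int]_n -> R) b :
  b \in S -> (forall q, q \in S -> 0 < F q) -> 0 < \sum_(q <- S) F q.
Proof.
move=> bS Fp; rewrite (big_fsetD1 _ bS) /=; apply: ltr_pwDl; first exact: Fp.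
rewrite big_seq; apply: sumr_ge0 => q; rewrite !inE => /andP [_ qS].
exact/ltW/Fp.
Qed.

Lemma quad (S : {fset 'rV[int]_n}) (T : 'rV[int]_n -> R) (u : 'rV[R]_n) :
  \sum_(m < n) u 0 m * \sum_(l < n) u 0 l *
     \sum_(q <- S) ((q 0 m)%:~R * (q 0 l)%:~R * T q)
  = \sum_(q <- S) T q * dotR u q ^+ 2.
Proof.
rewrite [RHS](eq_bigr (fun q : 'rV[int]_n => \sum_(m < n) \sum_(l < n)
   u 0 m * (u 0 l * ((q 0 m)%:~R * (q 0 l)%:~R * T q)))); last first.
  move=> q _; rewrite /dotR expr2 mulr_suml mulr_sumr; apply: eq_bigr => m _.
  by rewrite !mulr_sumr; apply: eq_bigr => l _; ring.
rewrite exchange_big; apply: eq_bigr => m _ /=.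
rewrite mulr_sumr exchange_big; apply: eq_bigr => l _ /=.
by rewrite !mulr_sumr.
Qed.

Lemma Dv_eq Ap Am c h (z : 'rV[R]_n.+1) j k : Dv Ap Am c h z j k =
  (\sum_(q <- Ap) wt R j q * (Ex h q k)%:~R * Tt c h q z
   - \sum_(q <- Am) wt R j q * (Ex h q k)%:~R * Tt c h q z) / z 0 k.
Proof.
rewrite /Dv mulrBl !mulr_suml; congr (_ - _); apply: eq_bigr => q _; rewrite /Tt; ring.
Qed.


Lemma main (Ap Am : {fset 'rV[int]_n}) (c : 'rV[int]_n -> R) (h : 'rV[int]_n -> int) :
  [disjoint Ap & Am]%fset ->
  full_dimensional R (Ap `|` Am)%fset ->
  nonseparable R Ap Am ->
  (forall a, a \in (Ap `|` Am)%fset -> 0 < c a) ->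
  lifts Ap Am h ->
  forall z : 'rV[R]_(n.+1), (forall k, 0 < z 0 k) ->
    Gsys Ap Am c h z = 0 ->
    \det (jacobian (Gsys Ap Am c h) z) != 0.
Proof.
move=> disj FD NS cpos [hm hp] z zp Gz.
pose T := fun q => Tt c h q z.
have Tpos : forall q, q \in (Ap `|` Am)%fset -> 0 < T q.
  by move=> q qA; rewrite /T /Tt mulr_gt0 ?cpos // MonoZ_gt0.
have TpA : forall q, q \in Ap -> 0 < T q.
  by move=> q qA; apply: Tpos; rewrite in_fsetU qA.
have TpB : forall q, q \in Am -> 0 < T q.
  by move=> q qA; apply: Tpos; rewrite in_fsetU qA orbT.
have C0 : forall j, Comp Ap Am c h j z = 0 by move=> j; rewrite -Gsys_Comp Gz mxE.
have S0 : \sum_(q <- Ap) T q = \sum_(q <- Am) T q.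
  apply/eqP; rewrite -subr_eq0; apply/eqP; rewrite -[RHS](C0 ord0) /Comp /wt unlift_none.
  by congr (_ - _); apply: eq_bigr => q _; rewrite mul1r.
have S1 : forall i, \sum_(q <- Ap) T q * (q 0 i)%:~R = \sum_(q <- Am) T q * (q 0 i)%:~R.
  move=> i; apply/eqP; rewrite -subr_eq0; apply/eqP.
  rewrite -[RHS](C0 (lift ord0 i)) /Comp /wt liftK.
  by congr (_ - _); apply: eq_bigr => q _; rewrite mulrC.
have [b bm] := Am_nonempty FD TpA S0.
rewrite (expand_det_col _ ord0) big_ord_recl big1 ?addr0; last first.
  move=> i _; rewrite jac_entry // Dv_eq.
  rewrite (_ : _ - _ = Comp Ap Am c h (lift ord0 i) z); first by rewrite C0 !mul0r.
  rewrite /Comp /wt /Ex unlift_none liftK.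
  by congr (_ - _); apply: eq_bigr => q _; rewrite mul1r.
rewrite mulf_neq0 //.
  rewrite jac_entry // Dv_eq /wt /Ex unlift_none.
  rewrite mulf_neq0 //; last by rewrite invr_eq0 gt_eqF.
  rewrite big_seq big1 ?sub0r; last by move=> q qA; rewrite hp // mulr0z mulr0 mul0r.
  rewrite oppr_eq0 gt_eqF //; apply: (sum_pos_seq (b := b)) => // q qm.
  by rewrite mul1r; apply: mulr_gt0; [rewrite ltr0z; exact: hm | exact: TpB].
rewrite /cofactor /= expr0 mul1r.
apply/negP => /det0P [v v0 vB].
pose u := \row_l (v 0 l / z 0 (lift ord0 l)).
have u0 : u != 0.
  apply: contra v0 => /eqP u0; apply/eqP/rowP => l.
  have := congr1 (fun M : 'rV[R]_n => M 0 l) u0; rewrite !mxE => /eqP.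
  by rewrite mulf_eq0 invr_eq0 (gt_eqF (zp _)) orbF => /eqP.
have Hm : forall m, \sum_(l < n) u 0 l *
    (\sum_(q <- Ap) (q 0 m)%:~R * (q 0 l)%:~R * T q
     - \sum_(q <- Am) (q 0 m)%:~R * (q 0 l)%:~R * T q) = 0.
  move=> m; have := congr1 (fun M : 'rV[R]_n => M 0 m) vB.
  rewrite [LHS]mxE [RHS]mxE => E; rewrite -[RHS]E; apply: eq_bigr => l _.
  have -> : row' ord0 (col' ord0 (jacobian (Gsys Ap Am c h) z)) l m =
     jacobian (Gsys Ap Am c h) z (lift ord0 l) (lift ord0 m) by rewrite !mxE.
  rewrite jac_entry // Dv_eq /wt /Ex !liftK /u mxE.
  by field; rewrite gt_eqF.
have := key FD NS TpA TpB S0 S1 u0.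
rewrite -!quad.
suff -> : \sum_(m < n) u 0 m * \sum_(l < n) u 0 l *
     \sum_(q <- Ap) ((q 0 m)%:~R * (q 0 l)%:~R * T q) =
   \sum_(m < n) u 0 m * \sum_(l < n) u 0 l *
     \sum_(q <- Am) ((q 0 m)%:~R * (q 0 l)%:~R * T q) by rewrite ltxx.
apply/eqP; rewrite -subr_eq0 -sumrB; apply/eqP; apply: big1 => m _.
by rewrite -mulrBr -sumrB (eq_bigr _ (fun l _ => esym (mulrBr _ _ _))) Hm mulr0.
Qed.

End P5.

End Helpers.

Local Open Scope fset_scope.

Theorem proposition4p4 (R : realType) (n : nat)
  (Ap Am : {fset 'rV[int]_n}) (c : 'rV[int]_n -> R) (h : 'rV[int]_n -> int) :
  [disjoint Ap & Am] ->
  full_dimensional R (Ap `|` Am) ->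
  nonseparable R Ap Am ->
  (forall a, a \in Ap `|` Am -> 0 < c a) ->
  lifts Ap Am h ->
  forall z : 'rV[R]_(n.+1), (forall k, 0 < z 0 k) ->
    Gsys Ap Am c h z = 0 ->
    \det (jacobian (Gsys Ap Am c h) z) != 0 (* derive.jacobian: matrix of the differential *).
Proof. exact: Helpers.main. Qed.
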